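(* Let $R\subseteq S$ be as in the context, with $q=|R/\mathfrak{m}|$ and $S/\mathfrak{M}=\mathbb{F}_{q^m}$. Let $1\le\ell\le q-1$ and let $\gamma$ be a primitive element of $\mathbb{F}_{q^m}$ (i.e., a generator of $\mathbb{F}_{q^m}^*$). Let $a_1,\ldots,a_\ell\in S^*$ be such that $\overline{a}_i=\gamma^{i-1}$ for $i=1,\ldots,\ell$, where $\overline{a}$ denotes the image of $a$ in $S/\mathfrak{M}$. Then $a_i-a_j^\beta\in S^*$ for all $\beta\in S^*$ and all $1\le i<j\le\ell$.
   Context: $R$ is a finite commutative chain ring with maximal ideal $\mathfrak{m}$, $q=|R/\mathfrak{m}|$; $S=R[x]/(h)$ with $h$ monic of degree $m$ irreducible modulo $\mathfrak{m}$, local with maximal ideal $\mathfrak{M}=\mathfrak{m}S$, unit group $S^*=S\setminus\mathfrak{M}$ and residue field $S/\mathfrak{M}=\mathbb{F}_{q^m}$. $\sigma$ is a ring automorphism of $S$ generating the Galois group of $R\subseteq S$, with fixed ring $R$, reducing modulo $\mathfrak{M}$ to $y\mapsto y^q$. For $a\in S$, $\beta\in S^*$: $a^\beta=\sigma(\beta)a\beta^{-1}$. *)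

(* Defs.v *)
From HB Require Import structures.
From mathcomp Require Import all_boot all_order all_algebra all_field.
Set Implicit Arguments. Unset Strict Implicit. Unset Printing Implicit Defensive.
Import GRing.Theory.
Local Open Scope ring_scope.

Definition is_ideal (R : finComUnitRingType) (I : {set R}) : Prop :=
  0 \in I /\ (forall x y, x \in I -> y \in I -> x + y \in I) /\
  (forall r x, x \in I -> r * x \in I).

Definition chain_ring (R : finComUnitRingType) : Prop :=
  forall I J : {set R}, is_ideal I -> is_ideal J -> (I \subset J) \/ (J \subset I).

Definition Ralg_aut (R S : finComUnitRingType) (iota : R -> S) (tau : S -> S) : Prop :=
  [/\ bijective tau, forall x y, tau (x + y) = tau x + tau y,
      forall x y, tau (x * y) = tau x * tau y, tau 1 = 1
    & forall r, tau (iota r) = iota r].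

Definition primitive_elt (K : finFieldType) (gamma : K) : Prop :=
  gamma != 0 /\ forall x : K, x != 0 -> exists k : nat, x = gamma ^+ k.

(* Main.v *)
Require Import Defs.
From mathcomp Require Import all_boot all_order all_algebra all_field all_fingroup all_solvable.
From mathcomp Require Import zify.
Import GRing.Theory.
Local Open Scope ring_scope.
Lemma prim_dvd (K : finFieldType) (g : K) : primitive_elt g ->
  forall e, (g ^+ e == 1) = (#|K|.-1 %| e)%N.
Proof.
case=> g0 gP e.
have Ug : g \is a GRing.unit by rewrite unitfE.
pose u : {unit K} := FinRing.unit K Ug.
have cyc : <[u]>%g = [set: {unit K}].
  apply/eqP; rewrite eqEsubset subsetT /=; apply/subsetP => v _; apply/cycleP.
  have v0 : val v != 0 by rewrite -unitfE (valP v).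
  have [n hn] := gP (val v) v0.
  by exists n; apply: val_inj; rewrite FinRing.val_unitX.
have -> : #|K|.-1 = #[u]%g by rewrite /order cyc card_finField_unit.
rewrite order_dvdn; apply/eqP/eqP => H.
  by apply: val_inj; rewrite FinRing.val_unitX H.
by have := congr1 val H; rewrite FinRing.val_unitX.
Qed.

Theorem proposition2
  (R : finComUnitRingType) (k : finFieldType) (piR : {rmorphism R -> k})
  (S : finComUnitRingType) (K : finFieldType) (piS : {rmorphism S -> K})
  (iota : {rmorphism R -> S}) (xi : S) (h : {poly R}) (m : nat)
  (sigma : {rmorphism S -> S})
  (l : nat) (gamma : K) (a : 'I_l -> S) :
  (* R finite commutative chain ring, residue field k = R/m, q = #|k| *)
  chain_ring R ->
  (forall y : k, exists r : R, piR r = y) ->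
  (forall r : R, piR r = 0 <-> r \notin GRing.unit) ->
  (* h monic of degree m, irreducible modulo m *)
  h \is monic -> (size h).-1 = m -> irreducible_poly (map_poly piR h) ->
  (* S = R[x]/(h) via p |-> p(xi) *)
  injective iota ->
  (forall s : S, exists p : {poly R}, s = (map_poly iota p).[xi]) ->
  (forall p : {poly R}, (map_poly iota p).[xi] = 0 <-> exists g, p = g * h) ->
  (* residue field K = S/M, M = set of non-units of S *)
  (forall y : K, exists s : S, piS s = y) ->
  (forall s : S, piS s = 0 <-> s \notin GRing.unit) ->
  (* sigma generates Gal(S/R), fixed ring R, reduces to Frobenius y |-> y^q *)
  Ralg_aut iota sigma ->
  (forall tau : S -> S, Ralg_aut iota tau -> exists n : nat, tau =1 iter n sigma) ->
  (forall s : S, sigma s = s <-> exists r : R, s = iota r) ->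
  (forall s : S, piS (sigma s) = piS s ^+ #|k|) ->
  (* hypotheses of the proposition *)
  (1 <= l <= #|k| - 1)%N ->
  primitive_elt gamma ->
  (forall i : 'I_l, a i \is a GRing.unit) ->
  (forall i : 'I_l, piS (a i) = gamma ^+ i) ->
  forall beta : S, beta \is a GRing.unit ->
  forall i j : 'I_l, (i < j)%N ->
    a i - sigma beta * a j * beta^-1 \is a GRing.unit.
Proof.
move=> _ surjR kerR _ _ _ _ _ _ _ kerS _ _ hfix hsig /andP[l1 lq] prim aU aS beta Ub i j ij.
set q := #|k|.
set N := #|K|.-1.
have q1 : (0 < q - 1)%N by apply: leq_trans lq.
have qN : (q - 1 %| N)%N.
  have sR : forall y, exists r, piR r == y by move=> y; have [r <-] := surjR y; exists r.
  pose r (y : k) : R := xchoose (sR y).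
  have rE y : piR (r y) = y by apply/eqP/(xchooseP (sR y)).
  pose f y := piS (iota (r y)).
  have finj : injective f.
    move=> y z /eqP; rewrite /f -subr_eq0 -!rmorphB => /eqP /kerS Hn.
    apply/eqP; rewrite -subr_eq0 -(rE y) -(rE z) -rmorphB; apply/eqP/kerR.
    by apply: contra Hn; apply: rmorph_unit.
  have f0 y : y != 0 -> f y != 0.
    move=> y0; apply/eqP => /kerS Hn; move/negP: y0; apply; apply/eqP.
    by rewrite -(rE y); apply/kerR; apply: contra Hn; apply: rmorph_unit.
  have fq y : f y ^+ q = f y.
    by rewrite /f -hsig (proj2 (hfix _)) //; exists (r y).
  have fq1 y : y != 0 -> f y ^+ (q - 1) = 1.
    move=> y0; apply: (mulfI (f0 y y0)); rewrite mulr1 -exprS.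
    by rewrite subn1 prednK ?fq // (leq_trans q1) // leq_subr.
  set g := gcdn (q - 1) N.
  have g0 : (0 < g)%N by rewrite gcdn_gt0 q1.
  have fg y : y != 0 -> f y ^+ g = 1.
    move=> y0; have xN : f y ^+ N = 1.
      apply: (mulfI (f0 y y0)); rewrite mulr1 -exprS /N prednK ?expf_card //.
      by apply/card_gt0P; exists 0.
    case: (egcdnP N q1) => km kn E _.
    by rewrite -[f y ^+ g]mul1r -{1}(expr1n _ kn) -xN -exprM mulnC -exprD -E mulnC exprM fq1 // expr1n.
  pose rs := map f (enum (predC1 (0 : k))).
  have : (size rs <= g)%N.
    apply: max_unity_roots => //.
      apply/allP => x /mapP [y]; rewrite mem_enum /= => y0 ->.
      by apply/unity_rootP; apply: fg.
    by rewrite map_inj_uniq ?enum_uniq.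
  rewrite size_map -cardE cardC1 => hq.
  have : g = (q - 1)%N.
    apply/eqP; rewrite eqn_leq dvdn_leq ?dvdn_gcdl //=.
    by rewrite subn1.
  by move <-; rewrite dvdn_gcdr.
apply/negPn/negP => /kerS.
rewrite rmorphB !rmorphM (rmorphV _ Ub) hsig !aS => /eqP; rewrite subr_eq0 => /eqP E.
set b := piS beta in E.
have b0 : b != 0 by apply/eqP => /kerS; rewrite Ub.
have [g0 _] := prim.
have [t bt] := (proj2 prim) b b0.
have E2 : gamma ^+ (i + t) = gamma ^+ (t * q + j).
  rewrite exprD E -bt.
  by rewrite divfK // bt -exprM mulnC -exprD.
have le : (i + t <= t * q + j)%N.
  rewrite addnC leq_add ?(ltnW ij) // leq_pmulr //.
  by apply: leq_trans q1 (leq_subr _ _).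
have : (N %| t * q + j - (i + t))%N.
  rewrite -(@prim_dvd _ _ prim); apply/eqP; apply: (mulfI (expf_neq0 (i + t) g0)).
  by rewrite -exprD subnKC // mulr1 E2.
have -> : (t * q + j - (i + t) = t * (q - 1) + (j - i))%N.
  have : (0 < q)%N by apply: leq_trans q1 (leq_subr _ _).
  have := ltnW ij.
  lia.
move=> /(dvdn_trans qN); rewrite dvdn_addr ?dvdn_mull // => /dvdn_leq.
rewrite subn_gt0 ij => /(_ isT).
have := ltn_ord j.
lia.
Qed.
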